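(* Let $S$ be an inverse semigroup. If $S$ is DSC, then $S$ is a group.
   Context: An inverse semigroup is a semigroup in which every element $s$ has a unique $t$ with $sts=s$ and $tst=t$. A diagonal subsemigroup of $S\times S$ is a subsemigroup containing $\{(s,s)\colon s\in S\}$; a congruence is a symmetric and transitive diagonal subsemigroup; $S$ is DSC if every diagonal subsemigroup of $S\times S$ is a congruence on $S$. *)

(* Defs.v *)
Definition associative {T : Type} (op : T -> T -> T) : Prop :=
  forall x y z, op x (op y z) = op (op x y) z.

Definition inverse_semigroup {T : Type} (op : T -> T -> T) : Prop :=
  associative op /\
  forall s, exists t, (op (op s t) s = s /\ op (op t s) t = t) /\
    forall t', op (op s t') s = s /\ op (op t' s) t' = t' -> t' = t.

(* A relation on S, i.e. a subset of S x S. *)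
Definition diagonal_subsemigroup {T : Type} (op : T -> T -> T)
    (R : T -> T -> Prop) : Prop :=
  (forall s, R s s) /\
  (forall a b c d, R a b -> R c d -> R (op a c) (op b d)).

Definition congruence {T : Type} (op : T -> T -> T) (R : T -> T -> Prop) : Prop :=
  diagonal_subsemigroup op R /\
  (forall a b, R a b -> R b a) /\
  (forall a b c, R a b -> R b c -> R a c).

Definition DSC {T : Type} (op : T -> T -> T) : Prop :=
  forall R : T -> T -> Prop, diagonal_subsemigroup op R -> congruence op R.

Definition is_group {T : Type} (op : T -> T -> T) : Prop :=
  exists e : T, (forall x, op e x = x /\ op x e = x) /\
    forall x, exists y, op x y = e /\ op y x = e.

(* Main.v *)
Require Import Defs.

Lemma inv_uniq {T} (op : T -> T -> T) : inverse_semigroup op ->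
  forall s t1 t2, (op (op s t1) s = s /\ op (op t1 s) t1 = t1) ->
  (op (op s t2) s = s /\ op (op t2 s) t2 = t2) -> t1 = t2.
Proof.
  intros [_ H] s t1 t2 H1 H2. destruct (H s) as [t [_ U]].
  rewrite (U _ H1), (U _ H2). reflexivity.
Qed.

Lemma idem_l {T} (op : T -> T -> T) : associative op ->
  forall e, op e e = e -> forall y, op e (op e y) = op e y.
Proof. intros A e He y. rewrite A, He. reflexivity. Qed.

Ltac norm A := repeat rewrite <- A in *.

Lemma idem_comm {T} (op : T -> T -> T) : inverse_semigroup op ->
  forall e f, op e e = e -> op f f = f -> op e f = op f e.
Proof.
  intros IS e f He Hf. pose proof IS as [A H].
  assert (Key : forall e f, op e e = e -> op f f = f -> op (op e f) (op e f) = op e f).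
  { clear e f He Hf. intros e f He Hf.
    pose proof (idem_l op A e He) as He'. pose proof (idem_l op A f Hf) as Hf'.
    destruct (H (op e f)) as [x [[X1 X2] U]].
    norm A.
    assert (X2' : forall y, op x (op e (op f (op x y))) = op x y).
    { intros y. rewrite (A f x y), (A e _ y), (A x _ y), X2. reflexivity. }
    assert (Hfxe : x = op (op f x) e).
    { symmetry. apply U. split; norm A.
      - rewrite Hf', He'. exact X1.
      - rewrite He', Hf', X2'. reflexivity. }
    assert (Hxx : op x x = x).
    { rewrite Hfxe. norm A. rewrite X2'. reflexivity. }
    assert (Hx : op e f = x).
    { apply (inv_uniq op IS x).
      - split; norm A; [exact X2 | exact X1].
      - rewrite Hxx, Hxx. auto. }
    transitivity (op (op e f) (op e f)); [rewrite <- A; reflexivity|].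
    rewrite Hx. exact Hxx. }
  pose proof (Key e f He Hf) as Kef. pose proof (Key f e Hf He) as Kfe.
  pose proof (idem_l op A e He) as He'. pose proof (idem_l op A f Hf) as Hf'.
  apply (inv_uniq op IS (op e f)).
  - rewrite Kef, Kef. auto.
  - norm A. rewrite Hf', He'. split.
    + exact Kef.
    + rewrite He', Hf'. exact Kfe.
Qed.

Theorem mainTheorem8 (T : Type) (op : T -> T -> T) (x0 : T) :
  inverse_semigroup op -> DSC op -> is_group op.
Proof.
  intros IS D. pose proof IS as [A H].
  assert (Inv : forall s, exists t, op (op s t) s = s /\ op (op t s) t = t).
  { intros s. destruct (H s) as [t [Ht _]]. exists t. exact Ht. }
  assert (Idl : forall s t, op (op s t) s = s -> op (op s t) (op s t) = op s t).
  { intros s t Hs. rewrite A, Hs. reflexivity. }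
  assert (Idr : forall s t, op (op s t) s = s -> op (op t s) (op t s) = op t s).
  { intros s t Hs. rewrite <- A. rewrite (A s t s), Hs. reflexivity. }
  set (R := fun a b => exists e, op e e = e /\ a = op e b).
  assert (DR : diagonal_subsemigroup op R).
  { split.
    - intros b. destruct (Inv b) as [t [H1 H2]]. exists (op b t). split.
      + apply Idl; exact H1.
      + symmetry; exact H1.
    - intros a b c d [e [He Hab]] [f [Hf Hcd]]. subst a c.
      destruct (Inv b) as [t [H1 H2]].
      pose proof (Idr b t H1) as Htb.
      pose proof (idem_comm op IS f (op t b) Hf Htb) as C1.
      assert (Hbf : op b f = op (op (op b f) t) b).
      { transitivity (op (op (op b t) b) f); [rewrite H1; reflexivity|].
        rewrite <- !A. rewrite (A t b f), <- C1. reflexivity. }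
      assert (Hi : op (op (op b f) t) (op (op b f) t) = op (op b f) t).
      { rewrite <- !A. rewrite (A t b (op f t)), (A (op t b) f t), <- C1.
        rewrite <- (A f (op t b) t), (A f f), Hf, H2.
        reflexivity. }
      pose proof (idem_comm op IS e _ He Hi) as C2.
      exists (op e (op (op b f) t)). split.
      + set (g := op (op b f) t) in *. clearbody g.
        rewrite <- A, (A g e g), <- C2, <- (A e g g), Hi, A, He. reflexivity.
      + rewrite <- (A e (op (op b f) t)). rewrite (A (op (op b f) t) b d).
        rewrite <- Hbf. rewrite !A. reflexivity. }
  destruct (D R DR) as [_ [Sym _]].
  assert (Uniq : forall e g, op e e = e -> op g g = g -> op e g = g).
  { intros e g He Hg.
    destruct (Sym (op e g) g (ex_intro _ e (conj He eq_refl))) as [f [Hf Hg']].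
    rewrite Hg'. rewrite (A e f), (idem_comm op IS e f He Hf).
    rewrite <- (A f e), (A e e), He. reflexivity. }
  assert (U1 : forall e g, op e e = e -> op g g = g -> e = g).
  { intros e g He Hg. rewrite <- (Uniq e g He Hg), (idem_comm op IS e g He Hg).
    symmetry. apply Uniq; assumption. }
  destruct (Inv x0) as [t0 [T1 T2]].
  exists (op x0 t0). split.
  - intros x. destruct (Inv x) as [t [H1 H2]]. split.
    + rewrite (U1 (op x0 t0) (op x t)); auto.
    + rewrite (U1 (op x0 t0) (op t x)); auto. rewrite A. exact H1.
  - intros x. destruct (Inv x) as [t [H1 H2]]. exists t. split.
    + symmetry. apply U1; auto.
    + symmetry. apply U1; auto.
Qed.
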